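(* Let $c>1$ be an irrational number, and for a positive integer $m$ let $x=[cm]$. Then, as $m\to\infty$, $$\int_1^x \frac{[c^{-1}([t]+1)]}{t^2}\,dt = \frac{1}{c}(\log m + \log c + \gamma) -\sum_{n=1}^\infty \frac{\{c^{-1}(n+1)\}}{n(n+1)} + O\left(\frac{1}{m}\right),$$ where $\gamma$ is Euler's constant.
   Context: $[x]$ is the greatest integer not exceeding $x$ and $\{x\}=x-[x]$. *)

(* Defs.v *)
From Stdlib Require Import Reals.
From Coquelicot Require Import Coquelicot.
Open Scope R_scope.

Definition fl (x : R) : R := IZR (Int_part x).
Definition frc (x : R) : R := x - fl x.

Definition euler_gamma : R :=
  real (Lim_seq (fun n : nat => sum_f_R0 (fun k => / INR (k + 1)) n - ln (INR (n + 1)))).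

Definition irrational (c : R) : Prop :=
  forall p q : Z, q <> 0%Z -> c <> IZR p / IZR q.

(* Main.v *)
Require Import Defs.
From Stdlib Require Import Reals Lra Lia.
From Coquelicot Require Import Coquelicot.
Open Scope R_scope.

Lemma ln_le_sub1 (y : R) : 0 < y -> ln y <= y - 1.
Proof. intros Hy. pose proof (exp_ineq1_le (ln y)). rewrite exp_ln in H; lra. Qed.

Lemma ln_diff (a b : R) : 0 < a -> 0 < b -> ln b - ln a <= b / a - 1.
Proof.
  intros Ha Hb. replace b with (a * (b / a)) at 1 by (field; lra).
  rewrite ln_mult; [| lra | apply Rdiv_lt_0_compat; lra].
  pose proof (ln_le_sub1 (b / a)). assert (0 < b / a) by (apply Rdiv_lt_0_compat; lra).
  specialize (H H0). lra.
Qed.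

Lemma lim_bounds (u : nat -> R) (N : nat) (lo hi : R) :
  (forall n, (N <= n)%nat -> lo <= u n <= hi) -> lo <= real (Lim_seq u) <= hi.
Proof.
  intros H.
  assert (H1 : Rbar_le (Lim_seq (fun _ => lo)) (Lim_seq u)).
  { apply Lim_seq_le_loc. exists N. intros n Hn. apply H; lia. }
  assert (H2 : Rbar_le (Lim_seq u) (Lim_seq (fun _ => hi))).
  { apply Lim_seq_le_loc. exists N. intros n Hn. apply H; lia. }
  rewrite Lim_seq_const in H1, H2.
  destruct (Lim_seq u); simpl in *; try contradiction; lra.
Qed.

Lemma Int_part_unique (z : Z) (r : R) : IZR z <= r < IZR z + 1 -> Int_part r = z.
Proof.
  intros [H1 H2]. destruct (base_Int_part r) as [A B].
  assert (IZR (Int_part r) < IZR (z + 1)) by (rewrite plus_IZR; lra).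
  assert (IZR (z - 1) < IZR (Int_part r)) by (rewrite minus_IZR; lra).
  apply lt_IZR in H. apply lt_IZR in H0. lia.
Qed.

Lemma frc_bounds (y : R) : 0 <= frc y < 1.
Proof. unfold frc, fl. destruct (base_Int_part y). lra. Qed.

Definition eu (n : nat) : R := sum_f_R0 (fun k => / INR (k + 1)) n - ln (INR (n + 1)).

Lemma INR_pos1 (n : nat) : 0 < INR (n + 1).
Proof. rewrite plus_INR; simpl; pose proof (pos_INR n); lra. Qed.

Lemma eu_decr (n : nat) : eu (S n) <= eu n.
Proof.
  unfold eu. change (sum_f_R0 ?f (S n)) with (sum_f_R0 f n + f (S n)); cbv beta.
  pose proof (ln_diff (INR (S n + 1)) (INR (n + 1)) (INR_pos1 _) (INR_pos1 _)).
  replace (INR (S n + 1)) with (INR (n+1) + 1) in * by (rewrite <- S_INR; f_equal; lia).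
  pose proof (INR_pos1 n).
  assert ((INR (n + 1)) / (INR (n + 1) + 1) - 1 = - / (INR (n+1) + 1)) by (field; lra).
  lra.
Qed.

Lemma eu_v_incr (n : nat) : eu n - / INR (n + 1) <= eu (S n) - / INR (S n + 1).
Proof.
  unfold eu. change (sum_f_R0 ?f (S n)) with (sum_f_R0 f n + f (S n)); cbv beta.
  pose proof (ln_diff (INR (n + 1)) (INR (S n + 1)) (INR_pos1 _) (INR_pos1 _)).
  replace (INR (S n + 1)) with (INR (n+1) + 1) in * by (rewrite <- S_INR; f_equal; lia).
  pose proof (INR_pos1 n).
  assert ((INR (n + 1) + 1) / (INR (n + 1)) - 1 = / (INR (n+1))) by (field; lra).
  lra.
Qed.

Lemma euler_bounds (N : nat) : eu N - / INR (N + 1) <= euler_gamma <= eu N.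
Proof.
  assert (H : forall n, (N <= n)%nat -> eu N - / INR (N + 1) <= eu n - / INR (n + 1) /\ eu n <= eu N).
  { intros n Hn. induction Hn. lra.
    pose proof (eu_decr m). pose proof (eu_v_incr m). lra. }
  unfold euler_gamma. apply (lim_bounds _ N). fold eu.
  intros n Hn. destruct (H n Hn).
  change (eu N - / INR (N + 1) <= eu n <= eu N).
  pose proof (INR_pos1 n). pose proof (Rinv_0_lt_compat _ H2). lra.
Qed.

Lemma series_bounds (a : nat -> R) (N : nat) :
  (forall k, 0 <= a k <= / (INR (k + 1) * INR (k + 2))) ->
  sum_f_R0 a N <= Series a <= sum_f_R0 a N + / INR (N + 2).
Proof.
  intros Ha. unfold Series.
  assert (forall n, (N <= n)%nat -> sum_f_R0 a N <= sum_n a n <= sum_f_R0 a N + / INR (N + 2) - / INR (n + 2)).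
  { intros n Hn. rewrite sum_n_Reals. induction Hn.
    - lra.
    - change (sum_f_R0 a (S m)) with (sum_f_R0 a m + a (S m)). specialize (Ha (S m)).
      replace (INR (S m + 1)) with (INR (m + 2)) in Ha by (f_equal; lia).
      replace (INR (S m + 2)) with (INR (m + 2) + 1) in * by (rewrite <- S_INR; f_equal; lia).
      assert (0 < INR (m + 2)) by (rewrite plus_INR; simpl; pose proof (pos_INR m); lra).
      assert (/ (INR (m + 2) * (INR (m + 2) + 1)) = / INR (m + 2) - / (INR (m + 2) + 1)) by (field; lra).
      lra. }
  assert (0 < INR (N + 2)) by (rewrite plus_INR; simpl; pose proof (pos_INR N); lra).
  apply (lim_bounds _ N). intros n Hn. specialize (H n Hn).
  assert (0 < INR (n + 2)) by (rewrite plus_INR; simpl; pose proof (pos_INR n); lra).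
  pose proof (Rinv_0_lt_compat _ H1). lra.
Qed.

Lemma is_RInt_inv2 (K a b : R) : 0 < a <= b ->
  is_RInt (fun t => K / t ^ 2) a b (K * (/ a - / b)).
Proof.
  intros Hab.
  assert (E : K * (/ a - / b) = minus ((fun t => - K / t) b) ((fun t => - K / t) a)).
  { unfold minus, plus, opp; simpl. field. lra. }
  rewrite E. apply (is_RInt_derive (fun t => - K / t) (fun t => K / t ^ 2)).
  - intros x Hx. rewrite Rmin_left in Hx by lra. rewrite Rmax_right in Hx by lra.
    auto_derive. lra. field. lra.
  - intros x Hx. rewrite Rmin_left in Hx by lra. rewrite Rmax_right in Hx by lra.
    apply (ex_derive_continuous (V := R_NormedModule) (fun t => K / t ^ 2)). auto_derive. repeat split; try lra; intro HH; nra.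
Qed.

Definition gI (c : R) (k : nat) : R :=
  fl (/ c * (INR (k + 1) + 1)) / (INR (k + 1) * INR (k + 2)).

Lemma is_RInt_piece (c : R) (k : nat) :
  is_RInt (fun t => fl (/ c * (fl t + 1)) / (t ^ 2)) (INR (k + 1)) (INR (k + 2)) (gI c k).
Proof.
  assert (E2 : INR (k + 2) = INR (k + 1) + 1) by (rewrite <- S_INR; f_equal; lia).
  pose proof (INR_pos1 k).
  apply is_RInt_ext with (f := fun t => fl (/ c * (INR (k + 1) + 1)) / t ^ 2).
  - intros x Hx. rewrite Rmin_left in Hx by lra. rewrite Rmax_right in Hx by lra.
    assert (fl x = INR (k + 1)).
    { unfold fl. rewrite INR_IZR_INZ. f_equal. apply Int_part_unique.
      rewrite <- INR_IZR_INZ. lra. }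
    rewrite H0. reflexivity.
  - unfold gI. replace (fl (/ c * (INR (k + 1) + 1)) / (INR (k + 1) * INR (k + 2)))
      with (fl (/ c * (INR (k + 1) + 1)) * (/ INR (k + 1) - / INR (k + 2))).
    apply is_RInt_inv2. lra. rewrite E2. field. lra.
Qed.

Lemma is_RInt_sum (c : R) (q : nat) :
  is_RInt (fun t => fl (/ c * (fl t + 1)) / (t ^ 2)) 1 (INR (S (S q))) (sum_f_R0 (gI c) q).
Proof.
  induction q.
  - simpl sum_f_R0. pose proof (is_RInt_piece c 0). simpl in H. exact H.
  - change (sum_f_R0 (gI c) (S q)) with (plus (sum_f_R0 (gI c) q) (gI c (S q))).
    apply (is_RInt_Chasles (V := R_NormedModule) _ 1 (INR (S (S q))) _ _ _ IHq).
    replace (INR (S (S q))) with (INR (S q + 1)) by (f_equal; lia).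
    replace (INR (S (S (S q)))) with (INR (S q + 2)) by (f_equal; lia).
    apply is_RInt_piece.
Qed.

Theorem lemma9 (c : R) (hc1 : 1 < c) (hirr : irrational c) :
  exists C M : R, 0 <= C /\
    forall m : nat, (1 <= m)%nat -> M <= INR m ->
      Rabs (RInt (fun t => fl (/ c * (fl t + 1)) / (t ^ 2)) 1 (fl (c * INR m))
            - (/ c * (ln (INR m) + ln c + euler_gamma)
               - Series (fun n : nat => frc (/ c * (INR (n + 1) + 1)) /
                                        (INR (n + 1) * INR (n + 2)))))
      <= C / INR m.
Proof.
  exists 6, 4. split; [lra|]. intros m Hm1 Hm4.
  set (a := fun n : nat => frc (/ c * (INR (n + 1) + 1)) / (INR (n + 1) * INR (n + 2))).
  set (z := Int_part (c * INR m)).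
  destruct (base_Int_part (c * INR m)) as [Z1 Z2]. fold z in Z1, Z2.
  assert (Hcm : INR m < c * INR m) by nra.
  assert (Hz4 : (4 <= z)%Z). { assert (3 < IZR z) by lra. apply lt_IZR in H. lia. }
  set (q := (Z.to_nat z - 2)%nat).
  assert (Hx : fl (c * INR m) = INR (S (S q))).
  { unfold fl. fold z. rewrite INR_IZR_INZ. f_equal. unfold q. lia. }
  rewrite Hx, (is_RInt_unique _ _ _ _ (is_RInt_sum c q)).
  assert (Hq2 : INR (S (S q)) = IZR z) by (rewrite <- Hx; reflexivity).
  assert (E1 : INR (S (S q)) = INR (q + 1) + 1) by (rewrite <- S_INR; f_equal; lia).
  assert (E2 : INR (q + 2) = INR (q + 1) + 1) by (rewrite <- S_INR; f_equal; lia).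
  pose proof (INR_pos1 q) as Pq.
  assert (Hdec : forall n, sum_f_R0 (gI c) n =
            / c * sum_f_R0 (fun k => / INR (k + 1)) n - sum_f_R0 a n).
  { assert (Hpt : forall k, gI c k = / c * / INR (k + 1) - a k).
    { intros k. unfold gI, a, frc.
      assert (INR (k + 2) = INR (k + 1) + 1) by (rewrite <- S_INR; f_equal; lia).
      pose proof (INR_pos1 k). rewrite H. field. lra. }
    induction n.
    - change (gI c 0 = / c * / INR (0 + 1) - a 0%nat). apply Hpt.
    - change (sum_f_R0 (gI c) n + gI c (S n) = / c * (sum_f_R0 (fun k => / INR (k + 1)) n + / INR (S n + 1)) - (sum_f_R0 a n + a (S n))).
      rewrite IHn, Hpt. ring. }
  rewrite Hdec.
  pose proof (euler_bounds q) as EB. unfold eu in EB.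
  pose proof (series_bounds a q) as SB.
  assert (Ha : forall k, 0 <= a k <= / (INR (k + 1) * INR (k + 2))).
  { intros k. unfold a. pose proof (frc_bounds (/ c * (INR (k + 1) + 1))).
    pose proof (INR_pos1 k). assert (0 < INR (k + 2)) by (rewrite plus_INR; simpl; pose proof (pos_INR k); lra).
    assert (0 < / (INR (k + 1) * INR (k + 2))) by (apply Rinv_0_lt_compat; nra).
    unfold Rdiv. nra. }
  specialize (SB Ha).
  assert (Hm0 : 0 < INR m) by lra.
  replace (ln (INR m) + ln c) with (ln (c * INR m)) by (rewrite ln_mult by lra; ring).
  set (H := sum_f_R0 (fun k : nat => / INR (k + 1)) q) in *.
  set (Sq := sum_f_R0 a q) in *.
  set (Ser := Series a) in *.
  set (r := / INR (q + 1)).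
  assert (Hr : 0 < r) by (apply Rinv_0_lt_compat; lra).
  assert (Hr2 : / INR (q + 2) <= r) by (rewrite E2; apply Rinv_le_contravar; lra).
  set (L := ln (c * INR m) - ln (INR (q + 1))).
  assert (L0 : 0 <= L).
  { unfold L. assert (ln (INR (q + 1)) <= ln (c * INR m)) by (apply ln_le; lra). lra. }
  assert (L2 : L <= 2 * r).
  { unfold L. pose proof (ln_diff (INR (q + 1)) (c * INR m) Pq ltac:(lra)).
    assert (c * INR m / INR (q + 1) - 1 = (c * INR m - INR (q + 1)) * r) by (unfold r; field; lra).
    assert ((c * INR m - INR (q + 1)) * r <= 2 * r) by (apply Rmult_le_compat_r; lra).
    lra. }
  assert (Hic : 0 < / c < 1).
  { split. apply Rinv_0_lt_compat; lra. rewrite <- Rinv_1. apply Rinv_lt_contravar; lra. }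
  set (D := H - ln (INR (q + 1)) - euler_gamma).
  assert (D0 : 0 <= D <= r) by (unfold D, r; lra).
  assert (Eq : / c * H - Sq - (/ c * (ln (c * INR m) + euler_gamma) - Ser)
               = / c * (D - L) + (Ser - Sq)) by (unfold D, L; ring).
  rewrite Eq.
  assert (B1 : - 2 * r <= / c * (D - L) <= r).
  { destruct Hic. split; nra. }
  assert (Hfin : 3 * r <= 6 / INR m).
  { unfold r. replace (3 * / INR (q + 1)) with (6 * / (2 * INR (q + 1))) by (field; lra).
    unfold Rdiv. apply Rmult_le_compat_l; [lra|]. apply Rinv_le_contravar; lra. }
  apply Rabs_le. lra.
Qed.
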